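(* Consider the two-period difference-in-differences setting with anticipation described in the context, and suppose: (i) (Sampling) $\{Y_{i0}(0,1), Y_{i0}(1,1), Y_{i0}(0), Y_{i1}(0), Y_{i1}(1), D_i, A_i\}_{i=1}^n$ are independent and identically distributed across $i$; (ii) $Y_{i0}(0)=Y_{i0}(0,1)$; (iii) (Parallel trends) $\mathbb{E}[g(Y_{i1}(0))-g(Y_{i0}(0))\mid D_i=1]=\mathbb{E}[g(Y_{i1}(0))-g(Y_{i0}(0))\mid D_i=0]$; (iv) $\mathbb{P}[A_i=1\mid D_i=1]\le \pi$ for a given $\pi\in(0,1)$; (v) $|\tau_g|\le|\mu_g|$. Let $m_g=\mathbb{E}[g(Y_{i1})-g(Y_{i0})\mid D_i=1]-\mathbb{E}[g(Y_{i1})-g(Y_{i0})\mid D_i=0]$. Then $\mu_g$ is partially identified via the closed interval \[\mu_g\in m_g\left[\min\left\{1,\frac{1}{1-\operatorname{sgn}(\tau_g\mu_g)\pi}\right\},\ \max\left\{1,\frac{1}{1-\operatorname{sgn}(\tau_g\mu_g)\pi}\right\}\right],\] i.e. $\mu_g=m_g c$ for some $c$ in the displayed interval of real numbers.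
   Context: There are two periods $t\in\{0,1\}$ and units $i=1,\dots,n$. Each unit has an observed binary treatment $D_i\in\{0,1\}$ (applied in period 1) and an unobserved binary anticipation status $A_i\in\{0,1\}$ in period 0 ($A_i=1$ means the unit anticipates). Potential outcomes: $Y_{i1}(d)$ for $d\in\{0,1\}$ in period 1; $Y_{i0}(0)$ in period 0 for untreated units; and $Y_{i0}(a,1)$, $a\in\{0,1\}$, the period-0 outcome of a unit that will be treated, with anticipation status $a$. Observed outcomes: $Y_{i1}=D_iY_{i1}(1)+(1-D_i)Y_{i1}(0)$ and $Y_{i0}=(1-D_i)Y_{i0}(0)+D_i[(1-A_i)Y_{i0}(0,1)+A_iY_{i0}(1,1)]$. Let $g$ be a known measurable real function with $\mathbb{E}|g(Y)|<\infty$ for the relevant outcomes. The parameter of interest is $\mu_g=\mathbb{E}[g(Y_{i1}(1))-g(Y_{i1}(0))\mid D_i=1]$, and the anticipatory effect is $\tau_g=\mathbb{E}[g(Y_{i0}(1,1))-g(Y_{i0}(0,1))\mid D_i=1,A_i=1]$. $\operatorname{sgn}$ denotes the sign function. *)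

(* Defs.v *)
From HB Require Import structures.
From mathcomp Require Import all_boot all_order all_algebra.
From mathcomp Require Import all_classical all_reals all_analysis.
Set Implicit Arguments. Unset Strict Implicit. Unset Printing Implicit Defensive.
Import Order.TTheory GRing.Theory Num.Theory.
Local Open Scope classical_set_scope.
Local Open Scope ring_scope.

Definition condE (R : realType) (d : measure_display) (T : measurableType d)
  (P : probability T R) (X : T -> R) (E : set T) : R :=
  fine (\int[P]_(x in E) (X x)%:E)%E / fine (P E).

Definition condP (R : realType) (d : measure_display) (T : measurableType d)
  (P : probability T R) (F E : set T) : R :=
  fine (P (F `&` E)) / fine (P E).

Definition obsY1 (T : Type) (R : Type) (D : T -> bool) (Y11 Y10 : T -> R) : T -> R :=
  fun x => if D x then Y11 x else Y10 x.
(* Y0 = (1-D) Y0(0) + D [(1-A) Y0(0,1) + A Y0(1,1)] *)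
Definition obsY0 (T : Type) (R : Type) (D A : T -> bool) (Y00 Y001 Y011 : T -> R)
  : T -> R :=
  fun x => if D x then (if A x then Y011 x else Y001 x) else Y00 x.

(* Main.v *)
Require Import Defs.
From HB Require Import structures.
From mathcomp Require Import all_boot all_order all_algebra.
From mathcomp Require Import all_classical all_reals all_analysis.
From mathcomp Require Import ring lra.
Import Order.TTheory GRing.Theory Num.Theory.
Local Open Scope classical_set_scope.
Local Open Scope ring_scope.


Lemma alg (R : realFieldType) (mu tau r pi : R) :
  0 < pi < 1 -> 0 <= r <= pi -> `|tau| <= `|mu| ->
  let b := 1 / (1 - Num.sg (tau * mu) * pi) in
  exists c : R, Num.min 1 b <= c <= Num.max 1 b /\ mu = (mu - tau * r) * c.
Proof.
move=> /andP[pi0 pi1] /andP[r0 rpi] Htm b.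
have [mu00|mu0] := eqVneq mu 0.
  rewrite mu00 in Htm *; move: Htm; rewrite normr0 normr_le0 => /eqP ->.
  exists 1; rewrite mul0r subr0 mul0r; split=> //.
  by rewrite ge_min le_max !lexx.
set t := tau / mu.
have etau : tau = t * mu by rewrite /t divfK.
have ht : `|t| <= 1 by rewrite /t normf_div ler_pdivrMr ?normr_gt0 // mul1r.
have sgt : Num.sg (tau * mu) = Num.sg t.
  by rewrite etau -mulrA sgrM -expr2 sgrX sqr_sg mu0 mulr1.
rewrite /b sgt {b sgt}.
have tr1 : `|t * r| <= pi.
  rewrite normrM (ger0_norm r0); have := ler_pM (normr_ge0 t) r0 ht rpi; by rewrite mul1r.
have tr2 : - pi <= t * r <= pi by rewrite -ler_norml.
move: tr2 => /andP[tra trb].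
have pos : 0 < 1 - t * r by lra.
exists (1 / (1 - t * r)); split; last first.
  rewrite etau; have nz : 1 - t * r != 0 by rewrite gt_eqF.
  by field.
rewrite !div1r.
case: (sgrP t) => [->|tpos|tneg].
- by rewrite !mul0r !subr0 invr1 ge_min le_max lexx.
- have tr0 : 0 <= t * r by rewrite mulr_ge0 // ltW.
  have h1 : 0 < 1 - 1 * pi by lra.
  rewrite ge_min le_max; apply/andP; split; apply/orP; [left|right].
    by rewrite invf_ge1 //; lra.
  by rewrite lef_pV2 ?posrE //; lra.
- have tr0 : t * r <= 0 by rewrite mulr_le0_ge0 // ltW.
  have h1 : 0 < 1 - (-1) * pi by lra.
  rewrite ge_min le_max; apply/andP; split; apply/orP; [right|left].
    by rewrite lef_pV2 ?posrE //; lra.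
  by rewrite invf_le1 //; lra.
Qed.

Lemma intB (R : realType) (d : measure_display) (T : measurableType d)
  (P : probability T R) (E : set T) (f h : T -> R) : measurable E ->
  P.-integrable setT (EFin \o f) -> P.-integrable setT (EFin \o h) ->
  P.-integrable E (EFin \o (fun x => f x - h x)).
Proof.
move=> mE ifi ih; apply: (integrableS measurableT mE (@subsetT _ E)).
have -> : EFin \o (fun x => f x - h x) = ((EFin \o f) \- (EFin \o h))%E.
  by apply/funext => x.
exact: integrableB.
Qed.

Lemma intD (R : realType) (d : measure_display) (T : measurableType d)
  (P : probability T R) (E : set T) (f h : T -> R) : measurable E ->
  P.-integrable E (EFin \o f) -> P.-integrable E (EFin \o h) ->
  P.-integrable E (EFin \o (fun x => f x + h x)).
Proof.
move=> mE ifi ih.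
have -> : EFin \o (fun x => f x + h x) = ((EFin \o f) \+ (EFin \o h))%E.
  by apply/funext => x.
exact: integrableD.
Qed.

(* One generic unit i: Y00 = Y_{i0}(0), Y001 = Y_{i0}(0,1), Y011 = Y_{i0}(1,1),
   Y10 = Y_{i1}(0), Y11 = Y_{i1}(1); D, A the treatment / anticipation status. *)
Theorem theorem1 (R : realType) (d : measure_display) (T : measurableType d)
  (P : probability T R)
  (Y00 Y001 Y011 Y10 Y11 : T -> R) (D A : T -> bool) (g : R -> R) (pi : R)
  (mY00 : measurable_fun setT Y00) (mY001 : measurable_fun setT Y001)
  (mY011 : measurable_fun setT Y011) (mY10 : measurable_fun setT Y10)
  (mY11 : measurable_fun setT Y11)
  (mD : measurable [set x | D x]) (mA : measurable [set x | A x])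
  (mg : measurable_fun setT g)
  (iY00 : P.-integrable setT (fun x => (g (Y00 x))%:E))
  (iY001 : P.-integrable setT (fun x => (g (Y001 x))%:E))
  (iY011 : P.-integrable setT (fun x => (g (Y011 x))%:E))
  (iY10 : P.-integrable setT (fun x => (g (Y10 x))%:E))
  (iY11 : P.-integrable setT (fun x => (g (Y11 x))%:E))
  (PD1 : (0 < P [set x | D x])%E)
  (PD0 : (0 < P [set x | ~~ D x])%E)
  (pi01 : 0 < pi < 1)
  (* (ii) *)
  (H2 : forall x, Y00 x = Y001 x)
  (* (iii) parallel trends *)
  (H3 : condE P (fun x => g (Y10 x) - g (Y00 x)) [set x | D x]
        = condE P (fun x => g (Y10 x) - g (Y00 x)) [set x | ~~ D x])
  (* (iv) *)
  (H4 : condP P [set x | A x] [set x | D x] <= pi)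
  (* (v) *)
  (H5 : `| condE P (fun x => g (Y011 x) - g (Y001 x)) [set x | D x && A x] |
        <= `| condE P (fun x => g (Y11 x) - g (Y10 x)) [set x | D x] |) :
  let mu := condE P (fun x => g (Y11 x) - g (Y10 x)) [set x | D x] in
  let tau := condE P (fun x => g (Y011 x) - g (Y001 x)) [set x | D x && A x] in
  let Y1 := obsY1 D Y11 Y10 in
  let Y0 := obsY0 D A Y00 Y001 Y011 in
  let m := condE P (fun x => g (Y1 x) - g (Y0 x)) [set x | D x]
           - condE P (fun x => g (Y1 x) - g (Y0 x)) [set x | ~~ D x] in
  let b := 1 / (1 - Num.sg (tau * mu) * pi) in
  exists c : R, Num.min 1 b <= c <= Num.max 1 b /\ mu = m * c.
Proof.
move=> mu tau Y1 Y0 m b.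
set SD := [set x | D x]; set SN := [set x | ~~ D x]; set SA := [set x | A x].
have eN : SN = ~` SD by apply/seteqP; split => x /= /negP.
have mN : measurable SN by rewrite eN; exact: measurableC.
have eDA : [set x | D x && A x] = SD `&` SA.
  by apply/seteqP; split => x /=; [move/andP|move=> [] -> ->].
set F1 := fun x => g (Y11 x) - g (Y10 x).
set F2 := fun x => g (Y10 x) - g (Y00 x).
set F3 := fun x => g (Y011 x) - g (Y001 x).
have i1 : P.-integrable SD (EFin \o F1) by exact: intB.
have i2 : P.-integrable SD (EFin \o F2) by exact: intB.
have i3A : P.-integrable SD (EFin \o (F3 \_ SA)).
  rewrite -restrict_EFin; apply: (integrableS measurableT mD (@subsetT _ SD)).
  apply/(integrable_mkcond _ mA).
  exact: intB.
have e1 : Rintegral P SD (fun x => g (Y1 x) - g (Y0 x)) =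
    Rintegral P SD F1 + Rintegral P SD F2 - Rintegral P (SD `&` SA) F3.
  rewrite Rintegral_mkcondr -RintegralD // -RintegralB //; last exact: intD.
  apply: eq_Rintegral => x /set_mem Dx.
  have Dx' : D x := Dx.
  have -> : (F3 \_ SA) x = if A x then F3 x else 0.
    rewrite patchE; have -> : (x \in SA) = A x by apply/idP/idP => [/set_mem|/mem_set].
    by [].
  rewrite /Y1 /Y0 /obsY1 /obsY0 /F1 /F2 /F3 Dx' H2.
  by case: (A x); lra.
have e2 : Rintegral P SN (fun x => g (Y1 x) - g (Y0 x)) = Rintegral P SN F2.
  apply: eq_Rintegral => x /set_mem Dx.
  have Dx' : D x = false by apply/negbTE.
  by rewrite /Y1 /Y0 /obsY1 /obsY0 /F2 Dx'.
have cE : forall X E, condE P X E = Rintegral P E X / fine (P E) by [].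
have mDA : measurable (SD `&` SA) by exact: measurableI.
have e3 : Rintegral P (SD `&` SA) F3 = tau * fine (P (SD `&` SA)).
  have [h0|h0] := eqVneq (fine (P (SD `&` SA))) 0.
    rewrite h0 mulr0.
    move/eqP: h0; rewrite fine_eq0 ?fin_num_measure // => /eqP h0.
    rewrite /Rintegral null_set_integral //.
    have i3 : P.-integrable (SD `&` SA) (EFin \o F3) by exact: intB.
    exact: (measurable_int P i3).
  by rewrite /tau cE eDA divfK.
have pDpos : 0 < fine (P SD).
  apply: fine_gt0; rewrite PD1 /=.
  by have := fin_num_measure P SD mD; rewrite ge0_fin_numE ?measure_ge0.
set r := fine (P (SA `&` SD)) / fine (P SD).
have mE : m = mu - tau * r.
  rewrite /m !cE e1 e2 /r (setIC SA) mulrA -e3.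
  rewrite !cE in H3; rewrite -H3 /mu cE /F1 /F2 /F3 /SD /SA.
  have : fine (P SD) != 0 by rewrite gt_eqF.
  move=> nz; field; exact: nz.
have hr : 0 <= r <= pi.
  apply/andP; split; last exact: H4.
  by rewrite divr_ge0 // fine_ge0 // measure_ge0.
have := @alg R mu tau r pi pi01 hr H5.
by rewrite -mE.
Qed.
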